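(* Even for two teams and nonnegative-value players who all strictly prefer the same team, there may not exist an allocation that is both EF1 and justified envy-free.
   Context: Setting: teams $T=[n]$, players $P=\{p_1,\dots,p_m\}$. Each player $p$ has a complete, transitive weak preference $\succsim_p$ over $T$ (strict part $\succ_p$). Each team $i$ has an additive valuation $v_i$, $v_i(S)=\sum_{p\in S}v_i(p)$; nonnegative-value players means $v_i(p)\ge0$ for all $i,p$. An allocation is an ordered partition $(A_1,\dots,A_n)$ of $P$. $A$ is EF1 if for all distinct $i,j$ there are $X\subseteq A_i$, $Y\subseteq A_j$ with $|X\cup Y|\le1$ and $v_i(A_i\setminus X)\ge v_i(A_j\setminus Y)$. Given $A$, a player $p\in A_i$ has justified envy toward a player $q\in A_j$ if $j\succ_p i$ and $v_j(p)>v_j(q)$. $A$ is justified envy-free (justified EF) if no player has justified envy toward another player. *)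

(* Defs.v *)
From HB Require Import structures.
From mathcomp Require Import all_boot all_order all_algebra.
Set Implicit Arguments. Unset Strict Implicit. Unset Printing Implicit Defensive.
Import Order.TTheory GRing.Theory Num.Theory.
Local Open Scope ring_scope.

(* Teams are 'I_n, players form a finite type P.
   pref p : rel 'I_n is the weak preference of player p: pref p i j means i ≿_p j.
   v i p is the value of player p for team i.
   An allocation (ordered partition of P into n bundles) is a map A : P -> 'I_n;
   the bundle of team i is [set p | A p == i]. *)

Definition weak_pref (n : nat) (P : finType) (pref : P -> rel 'I_n) : Prop :=
  forall p, total (pref p) /\ transitive (pref p).

Definition strict_pref (n : nat) (P : finType) (pref : P -> rel 'I_n)
  (p : P) (i j : 'I_n) : bool := pref p i j && ~~ pref p j i.

Definition bundle (n : nat) (P : finType) (A : P -> 'I_n) (i : 'I_n) : {set P} :=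
  [set p | A p == i].

Definition valuation (R : numDomainType) (n : nat) (P : finType)
  (v : 'I_n -> P -> R) (i : 'I_n) (S : {set P}) : R :=
  \sum_(p in S) v i p.

Definition nonneg_values (R : numDomainType) (n : nat) (P : finType)
  (v : 'I_n -> P -> R) : Prop := forall i p, 0 <= v i p.

Definition EF1 (R : numDomainType) (n : nat) (P : finType)
  (v : 'I_n -> P -> R) (A : P -> 'I_n) : Prop :=
  forall i j : 'I_n, i != j ->
    exists X Y : {set P},
      [/\ X \subset bundle A i, Y \subset bundle A j, (#|X :|: Y| <= 1)%N &
          valuation v i (bundle A j :\: Y) <= valuation v i (bundle A i :\: X)].

Definition justified_envy (R : numDomainType) (n : nat) (P : finType)
  (pref : P -> rel 'I_n) (v : 'I_n -> P -> R) (A : P -> 'I_n) (p q : P) : Prop :=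
  strict_pref pref p (A q) (A p) /\ v (A q) q < v (A q) p.

Definition justified_EF (R : numDomainType) (n : nat) (P : finType)
  (pref : P -> rel 'I_n) (v : 'I_n -> P -> R) (A : P -> 'I_n) : Prop :=
  forall p q : P, ~ justified_envy pref v A p q.

(* Main.v *)
Require Import Defs.
From mathcomp Require Import all_boot all_order all_algebra.
From mathcomp Require Import lra.
Import Order.TTheory GRing.Theory Num.Theory.
Local Open Scope ring_scope.

Section Aux.
Variable R : realFieldType.

Lemma ef1_fail (P : finType) (n : nat) (v : 'I_n -> P -> R) (A : P -> 'I_n)
  (i j : 'I_n) (M : R) :
  i != j -> nonneg_values v -> 0 <= M -> (forall p, v i p <= M) ->
  valuation v i (bundle A i) < valuation v i (bundle A j) - M -> ~ EF1 v A.
Proof.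
move=> ij nn M0 bM lt H; have [X [Y [_ _ cXY le]]] := H i j ij.
have h1 : valuation v i (bundle A i :\: X) <= valuation v i (bundle A i).
  rewrite /valuation [X in _ <= X](big_setID X) /= lerDr.
  by apply: sumr_ge0 => p _.
have h2 : valuation v i (bundle A j) - M <= valuation v i (bundle A j :\: Y).
  rewrite /valuation (big_setID Y) /=.
  suff : \sum_(i0 in bundle A j :&: Y) v i i0 <= M by move=> ?; lra.
  apply: (le_trans (ler_sum _ (fun p _ => bM p))).
  rewrite sumr_const.
  have : (#|bundle A j :&: Y| <= 1)%N.
    apply: leq_trans cXY; apply: leq_trans (subset_leq_card (subsetUr X Y)).
    exact/subset_leq_card/subsetIr.
  case: #|_| => [|[|//]] _; first by rewrite mulr0n.
  by rewrite mulr1n.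
have := le_lt_trans (le_trans le h1) lt.
by move/(le_lt_trans h2); rewrite ltxx.
Qed.

Definition p0 : 'I_4 := @Ordinal 4 0 isT.
Definition p1 : 'I_4 := @Ordinal 4 1 isT.
Definition p2 : 'I_4 := @Ordinal 4 2 isT.
Definition p3 : 'I_4 := @Ordinal 4 3 isT.
Definition t0 : 'I_2 := @Ordinal 2 0 isT.
Definition t1 : 'I_2 := @Ordinal 2 1 isT.

Lemma sum4 (F : 'I_4 -> R) : \sum_(p < 4) F p = F p0 + F p1 + F p2 + F p3.
Proof.
rewrite !big_ord_recl big_ord0 addr0 !addrA.
by congr (_ + _ + _ + _); congr F; apply: val_inj.
Qed.

Lemma I2 (x : 'I_2) : x = t0 \/ x = t1.
Proof. by case: x => [[|[|//]] h]; [left|right]; apply: val_inj. Qed.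

Lemma val4 (v : 'I_2 -> 'I_4 -> R) (A : 'I_4 -> 'I_2) i j :
  valuation v i (bundle A j) =
  (if A p0 == j then v i p0 else 0) + (if A p1 == j then v i p1 else 0) +
  (if A p2 == j then v i p2 else 0) + (if A p3 == j then v i p3 else 0).
Proof. by rewrite /valuation big_mkcond sum4 /bundle !inE. Qed.

End Aux.

Definition prefr (p : 'I_4) : rel 'I_2 := fun i j => (i == t0) || (j == t1).
Definition vv (R : realFieldType) (i : 'I_2) (p : 'I_4) : R :=
  if i == t0 then nth 0 [:: 10; 9; 8; 7] p else nth 0 [:: 1; 1; 0; 0] p.

Theorem proposition6 (R : realFieldType) :
  exists (P : finType) (pref : P -> rel 'I_2) (v : 'I_2 -> P -> R),
    [/\ weak_pref pref, nonneg_values v,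
        (exists t : 'I_2, forall (p : P) (i : 'I_2), i != t -> strict_pref pref p t i) &
        forall A : P -> 'I_2, ~ (EF1 v A /\ justified_EF pref v A)].
Proof.
exists ('I_4 : finType), prefr, (@vv R); split.
- move=> p; split.
    by move=> i j; case: (I2 i) => ->; case: (I2 j) => ->.
  by move=> j i k; case: (I2 i) => ->; case: (I2 j) => ->; case: (I2 k) => ->.
- move=> i p; rewrite /vv; case: (I2 i) => ->;
  case: p => [[|[|[|[|//]]]] h] /=; lra.
- exists t0 => p i; case: (I2 i) => -> //.
- move=> A [hE hJ].
  have jf : forall p q, A q = t0 -> A p = t1 -> ~ (vv R t0 q < vv R t0 p).
    move=> p q Aq Ap lt; apply: (hJ p q); rewrite /justified_envy Aq Ap.
    by split.
  have n01 : t0 != t1 by [].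
  have n10 : t1 != t0 by [].
  case: (I2 (A p0)) => a0; case: (I2 (A p1)) => a1;
  case: (I2 (A p2)) => a2; case: (I2 (A p3)) => a3;
  try (by apply: (jf p0 p1) ; [done | done | rewrite /vv /=; lra]);
  try (by apply: (jf p0 p2) ; [done | done | rewrite /vv /=; lra]);
  try (by apply: (jf p0 p3) ; [done | done | rewrite /vv /=; lra]);
  try (by apply: (jf p1 p2) ; [done | done | rewrite /vv /=; lra]);
  try (by apply: (jf p1 p3) ; [done | done | rewrite /vv /=; lra]);
  try (by apply: (jf p2 p3) ; [done | done | rewrite /vv /=; lra]).
  all: first
    [ (apply: (@ef1_fail R _ _ _ A t1 t0 1 n10 _ _ _ _ hE);
       [ (move=> i p; rewrite /vv; case: (I2 i) => ->;
          case: p => [[|[|[|[|//]]]] h] /=; lra)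
       | lra
       | (move=> p; rewrite /vv /=; case: p => [[|[|[|[|//]]]] h] /=; lra)
       | (rewrite !val4 a0 a1 a2 a3 /vv /=; lra) ])
    | (apply: (@ef1_fail R _ _ _ A t0 t1 10 n01 _ _ _ _ hE);
       [ (move=> i p; rewrite /vv; case: (I2 i) => ->;
          case: p => [[|[|[|[|//]]]] h] /=; lra)
       | lra
       | (move=> p; rewrite /vv /=; case: p => [[|[|[|[|//]]]] h] /=; lra)
       | (rewrite !val4 a0 a1 a2 a3 /vv /=; lra) ]) ].
Qed.
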